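(* For contexts $\Gamma,\Delta$ and formulas $A,B$: if $\Gamma\vdash A$ has a focused derivation and $\Delta\vdash B$ has a focused derivation, then $\Gamma,\Delta\vdash A\bullet B$ has a focused derivation.
   Context: Formulas are built from atoms ($p,q,\dots$) by a binary product: every formula is an atom or $A\bullet B$. A context is a finite (possibly empty) list of formulas; commas denote concatenation. A context is irreducible if its leftmost formula is not a product (it is empty or begins with an atom). A focused derivation of a sequent is a finite derivation tree with no undischarged premises using only the rules: ($\bullet L$): from $A,B,\Delta\vdash C$ infer $A\bullet B,\Delta\vdash C$; ($\bullet R^{foc}$): from $\Gamma\vdash A$ and $\Delta\vdash B$ infer $\Gamma,\Delta\vdash A\bullet B$, where $\Gamma$ is irreducible; and ($id^{atm}$): $p\vdash p$ for atoms $p$. *)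

(* Defs.v *)
From Stdlib Require Import List.
Import ListNotations.

Inductive formula : Type :=
| atom : nat -> formula
| prod : formula -> formula -> formula.

Definition context := list formula.

Definition irreducible (G : context) : Prop :=
  match G with
  | [] => True
  | atom _ :: _ => True
  | prod _ _ :: _ => False
  end.

Inductive focused : context -> formula -> Prop :=
| foc_prodL : forall A B D C,
    focused (A :: B :: D) C -> focused (prod A B :: D) C
| foc_prodR : forall G D A B,
    irreducible G -> focused G A -> focused D B ->
    focused (G ++ D) (prod A B)
| foc_id : forall p, focused [atom p] (atom p).

(* Main.v *)
Require Import Defs.
From Stdlib Require Import List Lia.
Import ListNotations.

Lemma inv_prodL L C : focused L C ->
  forall X Y G', L = prod X Y :: G' -> focused (X :: Y :: G') C.
Proof.
  induction 1; intros X Y G' E.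
  - injection E; intros; subst; assumption.
  - destruct G as [|f G].
    + simpl in E. subst D.
      change (X :: Y :: G') with ([] ++ (X :: Y :: G')).
      apply foc_prodR; auto.
    + simpl in E. injection E; intros; subst. contradiction.
  - discriminate.
Qed.

Fixpoint fsize (f : formula) : nat :=
  match f with atom _ => 1 | prod a b => S (fsize a + fsize b) end.

Definition hsize (G : context) : nat :=
  match G with [] => 0 | f :: _ => fsize f end.

Lemma main n : forall G D A B, hsize G <= n ->
  focused G A -> focused D B -> focused (G ++ D) (prod A B).
Proof.
  induction n; intros G D A B Hs HG HD.
  - destruct G as [|f G]; [apply foc_prodR; simpl; auto|].
    destruct f; simpl in Hs; lia.
  - destruct G as [|f G]; [apply foc_prodR; simpl; auto|].
    destruct f as [p|X Y].
    + apply foc_prodR; simpl; auto.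
    + simpl. apply foc_prodL.
      change (X :: Y :: G ++ D) with ((X :: Y :: G) ++ D).
      apply IHn; auto.
      * simpl in *. lia.
      * eapply inv_prodL; eauto.
Qed.

Theorem lemma1p15 (G D : context) (A B : formula) :
  focused G A -> focused D B -> focused (G ++ D) (prod A B).
Proof.
  intros. eapply main; eauto.
Qed.
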